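(* For every integer $n\geq1$ the function $$p_n(t)=\frac{1}{t^2}\sum_{k=1}^\infty(2\pi k)^{1-2n}\left(\frac{4\pi k}{t^2+(2\pi k)^2}+\frac{8\pi kt}{(t^2+(2\pi k)^2)^2}+\frac{2n-1}{2\pi k}\,\frac{2t}{t^2+(2\pi k)^2}\right),\qquad t>0,$$ is completely monotonic on $(0,\infty)$.
   Context: A function $g$ on $(0,\infty)$ is completely monotonic if it is $C^\infty$ and $(-1)^mg^{(m)}(t)\geq0$ for all $m\geq0$ and $t>0$. *)

(* Defs.v *)
From Stdlib Require Import Reals.
From Coquelicot Require Import Coquelicot.
Open Scope R_scope.

Definition completely_monotonic (g : R -> R) : Prop :=
  forall (m : nat) (t : R), 0 < t ->
    ex_derive_n g m t /\ 0 <= (-1) ^ m * Derive_n g m t.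

Definition pn_term (n : nat) (t : R) (k : R) : R :=
  let a := 2 * PI * k in
  / a ^ (2 * n - 1) *
  ( 4 * PI * k / (t ^ 2 + a ^ 2)
  + 8 * PI * k * t / (t ^ 2 + a ^ 2) ^ 2
  + (2 * INR n - 1) / a * (2 * t / (t ^ 2 + a ^ 2)) ).

(* p_n(t) = t^{-2} * sum_{k>=1} pn_term n t k ; the series index j >= 0
   corresponds to k = j + 1. *)
Definition p_n (n : nat) (t : R) : R :=
  / t ^ 2 * Series (fun j : nat => pn_term n t (INR (S j))).

(* Main.v *)
Require Import Defs.
From Stdlib Require Import Reals.
From Coquelicot Require Import Coquelicot.
Open Scope R_scope.
From Stdlib Require Import Lra Lia Factorial.

Lemma locally_pos (t : R) : 0 < t -> locally t (fun s => 0 < s).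
Proof. intros Ht. apply (open_gt 0). exact Ht. Qed.

Lemma fam_derive_n (G : nat -> R -> R) (f : R -> R) :
  (forall t, 0 < t -> f t = G O t) ->
  (forall m t, 0 < t -> is_derive (G m) t (G (S m) t)) ->
  forall m t, 0 < t -> ex_derive_n f m t /\ Derive_n f m t = G m t.
Proof.
  intros Hf HG m. induction m as [|m IH]; intros t Ht.
  - split; [exact I| simpl; auto].
  - assert (Hloc : locally t (fun s => G m s = Derive_n f m s)).
    { generalize (locally_pos t Ht). apply filter_imp. intros s Hs.
      symmetry. apply (IH s Hs). }
    assert (Hd : is_derive (Derive_n f m) t (G (S m) t)).
    { apply (is_derive_ext_loc (G m)). exact Hloc. apply HG; auto. }
    split.
    + simpl. eexists. exact Hd.
    + simpl. apply is_derive_unique. exact Hd.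
Qed.

Fixpoint XY (a t : R) (n : nat) : R * R :=
  match n with
  | O => (1, 0)
  | S n => ((t * fst (XY a t n) + a * snd (XY a t n)) / (t^2 + a^2),
            (t * snd (XY a t n) - a * fst (XY a t n)) / (t^2 + a^2))
  end.
Definition Xn a n t := fst (XY a t n).
Definition Yn a n t := snd (XY a t n).

Lemma XY_S a n t : Xn a (S n) t = (t * Xn a n t + a * Yn a n t) / (t^2 + a^2)
  /\ Yn a (S n) t = (t * Yn a n t - a * Xn a n t) / (t^2 + a^2).
Proof. split; reflexivity. Qed.

Lemma u_pos a t : 0 < a -> 0 < t^2 + a^2.
Proof. intros. nra. Qed.

Lemma XY_derive a (Ha : 0 < a) : forall n t,
  is_derive (Xn a n) t (- INR n * Xn a (S n) t) /\
  is_derive (Yn a n) t (- INR n * Yn a (S n) t).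
Proof.
  induction n as [|n IH]; intros t.
  - split; unfold Xn, Yn; simpl; auto_derive; auto; ring.
  - destruct (IH t) as [HX HY].
    assert (Hu := u_pos a t Ha).
    split.
    + apply (is_derive_ext (fun t => (t * Xn a n t + a * Yn a n t) / (t^2 + a^2))).
      { intros; reflexivity. }
      auto_derive.
      * repeat split; try (eexists; eassumption). lra.
      * replace (Derive (fun x => Xn a n x) t) with (- INR n * Xn a (S n) t)
          by (symmetry; apply is_derive_unique; exact HX).
        replace (Derive (fun x => Yn a n x) t) with (- INR n * Yn a (S n) t)
          by (symmetry; apply is_derive_unique; exact HY).
        destruct (XY_S a (S n) t) as [E1 E2]. rewrite E1.
        destruct (XY_S a n t) as [E3 E4]. rewrite E3, E4.
        rewrite S_INR. field. lra.
    + apply (is_derive_ext (fun t => (t * Yn a n t - a * Xn a n t) / (t^2 + a^2))).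
      { intros; reflexivity. }
      auto_derive.
      * repeat split; try (eexists; eassumption). lra.
      * replace (Derive (fun x => Xn a n x) t) with (- INR n * Xn a (S n) t)
          by (symmetry; apply is_derive_unique; exact HX).
        replace (Derive (fun x => Yn a n x) t) with (- INR n * Yn a (S n) t)
          by (symmetry; apply is_derive_unique; exact HY).
        destruct (XY_S a (S n) t) as [E1 E2]. rewrite E2.
        destruct (XY_S a n t) as [E3 E4]. rewrite E3, E4.
        rewrite S_INR. field. lra.
Qed.
Definition valid (G : nat -> R -> R) := forall m t, 0 < t -> is_derive (G m) t (G (S m) t).
Definition signok (G : nat -> R -> R) := forall m t, 0 < t -> 0 <= (-1)^m * G m t.

Fixpoint fprod (m : nat) (F G : nat -> R -> R) (t : R) : R :=
  match m with
  | O => F O t * G O t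
  | S m => fprod m (fun k => F (S k)) G t + fprod m F (fun k => G (S k)) t
  end.

Lemma fprod_valid : forall m F G, valid F -> valid G ->
  forall t, 0 < t -> is_derive (fprod m F G) t (fprod (S m) F G t).
Proof.
  induction m as [|m IH]; intros F G HF HG t Ht.
  - simpl. apply (is_derive_mult (F O) (G O)); auto.
    intros; apply Rmult_comm.
  - simpl. apply (is_derive_plus (fun t => fprod m (fun k => F (S k)) G t)
                              (fun t => fprod m F (fun k => G (S k)) t)).
    + apply IH; auto. intros k s Hs; apply HF; auto.
    + apply IH; auto. intros k s Hs; apply HG; auto.
Qed.

Lemma fprod_scal_l : forall m F G c t,
  fprod m (fun k s => c * F k s) G t = c * fprod m F G t.
Proof.
  induction m as [|m IH]; intros F G c t; simpl.
  - ring.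
  - rewrite (IH (fun k => F (S k)) G c t).
    rewrite (IH F (fun k => G (S k)) c t). ring.
Qed.

Lemma fprod_scal_r : forall m F G c t,
  fprod m F (fun k s => c * G k s) t = c * fprod m F G t.
Proof.
  induction m as [|m IH]; intros F G c t; simpl.
  - ring.
  - rewrite (IH (fun k => F (S k)) G c t).
    rewrite (IH F (fun k => G (S k)) c t). ring.
Qed.

Lemma signok_neg_shift F : signok F -> signok (fun k s => -1 * F (S k) s).
Proof.
  intros H k t Ht. specialize (H (S k) t Ht). simpl in H. nra.
Qed.

Lemma valid_neg_shift F : valid F -> valid (fun k s => -1 * F (S k) s).
Proof.
  intros H k t Ht. apply (is_derive_scal (fun s => F (S k) s)). apply H; auto.
Qed.

Lemma fprod_sign : forall m F G, signok F -> signok G ->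
  forall t, 0 < t -> 0 <= (-1)^m * fprod m F G t.
Proof.
  induction m as [|m IH]; intros F G HF HG t Ht.
  - simpl. specialize (HF O t Ht). specialize (HG O t Ht). simpl in *. nra.
  - simpl.
    assert (H1 := IH _ _ (signok_neg_shift F HF) HG t Ht).
    assert (H2 := IH _ _ HF (signok_neg_shift G HG) t Ht).
    rewrite (fprod_scal_l m (fun k => F (S k)) G (-1) t) in H1.
    rewrite (fprod_scal_r m F (fun k => G (S k)) (-1) t) in H2.
    match goal with |- 0 <= _ * (?A + ?B) =>
      replace (-1 * (-1)^m * (A + B)) with ((-1)^m * (-1 * A) + (-1)^m * (-1 * B)) by ring end.
    lra.
Qed.
Lemma XY_norm a t n : 0 < a -> Xn a n t ^2 + Yn a n t ^2 = / (t^2+a^2)^n.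
Proof.
  intros Ha. assert (Hu := u_pos a t Ha). induction n as [|n IH].
  - unfold Xn, Yn; simpl. field.
  - destruct (XY_S a n t) as [E1 E2]. rewrite E1, E2.
    replace ((t^2+a^2)^S n) with ((t^2+a^2) * (t^2+a^2)^n) by (simpl; ring).
    rewrite Rinv_mult, <- IH. field. lra.
Qed.

Lemma pow2_sq_le (x b : R) : 0 <= b -> x^2 <= b^2 -> Rabs x <= b.
Proof.
  intros Hb H. rewrite <- (pow2_abs x) in H. assert (0 <= Rabs x) by apply Rabs_pos. nra.
Qed.

Lemma XY_abs a t n : 0 < a -> 0 < t -> Rabs (Xn a n t) <= / t^n /\ Rabs (Yn a n t) <= / t^n.
Proof.
  intros Ha Ht. assert (Hn := XY_norm a t n Ha).
  assert (Hu : / (t^2+a^2)^n <= (/ t^n)^2).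
  { replace ((/ t^n)^2) with (/ (t^2)^n).
    2:{ rewrite pow_inv. f_equal. rewrite <- !pow_mult. f_equal. lia. }
    apply Rinv_le_contravar. apply pow_lt; nra.
    apply pow_incr. split; nra. }
  assert (0 <= / t^n) by (apply Rlt_le, Rinv_0_lt_compat, pow_lt; lra).
  split; apply pow2_sq_le; auto; nra.
Qed.

Lemma Y_abs2 a t n : 0 < a -> 0 < t -> Rabs (Yn a n t) <= INR n * a / t^(S n).
Proof.
  intros Ha Ht. induction n as [|n IH].
  - unfold Yn; simpl. rewrite Rabs_R0. lra.
  - destruct (XY_S a n t) as [_ E2]. rewrite E2.
    destruct (XY_abs a t n Ha Ht) as [HX _].
    assert (Hu := u_pos a t Ha).
    assert (Htn : 0 < t^n) by (apply pow_lt; lra).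
    unfold Rdiv. rewrite Rabs_mult, (Rabs_right (/ _)) by (apply Rle_ge, Rlt_le, Rinv_0_lt_compat; lra).
    apply Rle_trans with ((t * Rabs (Yn a n t) + a * Rabs (Xn a n t)) * / (t^2+a^2)).
    { apply Rmult_le_compat_r. apply Rlt_le, Rinv_0_lt_compat; lra.
      eapply Rle_trans. apply Rabs_triang. rewrite Rabs_Ropp, !Rabs_mult, (Rabs_right t), (Rabs_right a) by lra. lra. }
    apply Rle_trans with ((INR (S n) * a / t^n) * / (t^2 + a^2)).
    { apply Rmult_le_compat_r. apply Rlt_le, Rinv_0_lt_compat; lra.
      rewrite S_INR.
      replace ((INR n + 1) * a / t^n) with (t * (INR n * a / t^(S n)) + a * / t^n)
        by (simpl; field; split; lra).
      assert (0 <= Rabs (Yn a n t)) by apply Rabs_pos. nra. }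
    assert (0 <= INR (S n)) by apply pos_INR.
    replace (t ^ S (S n)) with (t^n * t^2) by (simpl; ring).
    unfold Rdiv. rewrite Rinv_mult.
    rewrite Rmult_assoc. apply Rmult_le_compat_l. nra.
    apply Rmult_le_compat_l. apply Rlt_le, Rinv_0_lt_compat; lra.
    apply Rinv_le_contravar; nra.
Qed.

Lemma fact_S_INR m : INR (fact (S m)) = INR (S m) * INR (fact m).
Proof. rewrite <- mult_INR. reflexivity. Qed.

Ltac fixINR := repeat match goal with |- context [match ?m with 0%nat => 1 | S _ => INR ?m + 1 end] =>
  replace (match m with 0%nat => 1 | S _ => INR m + 1 end) with (INR m + 1) by (destruct m; simpl; ring) end.
Ltac nz := apply Rgt_not_eq, Rlt_gt; repeat (apply Rmult_lt_0_compat || apply pow_lt); lra.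

Definition fam_inv (m : nat) (t : R) := (-1)^m * INR (fact m) * / t^(S m).
Definition fam_inv2 (m : nat) (t : R) := (-1)^m * INR (fact (S m)) * / t^(S (S m)).
Definition fam_X a (m : nat) (t : R) := (-1)^m * INR (fact m) * Xn a (S m) t.
Definition fam_Y a (m : nat) (t : R) := (-1)^m * INR (fact m) * Yn a (S m) t.

Lemma fam_inv_valid : valid fam_inv.
Proof.
  intros m t Ht. unfold fam_inv. auto_derive.
  - nz.
  - fixINR. rewrite fact_S_INR; repeat rewrite S_INR; cbn [pow]. field. split; nz.
Qed.

Lemma fam_inv2_valid : valid fam_inv2.
Proof.
  intros m t Ht. unfold fam_inv2. auto_derive.
  - nz.
  - fixINR. rewrite (fact_S_INR (S m)), ?plus_INR, ?mult_INR, ?fact_S_INR; repeat rewrite S_INR; cbn [pow]. field. repeat split; nz.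
Qed.

Lemma fam_X_valid a : 0 < a -> valid (fam_X a).
Proof.
  intros Ha m t Ht. unfold fam_X.
  destruct (XY_derive a Ha (S m) t) as [HX _].
  apply is_derive_scal with (k := (-1)^m * INR (fact m)) in HX.
  replace ((-1)^S m * INR (fact (S m)) * Xn a (S (S m)) t) with
    ((-1)^m * INR (fact m) * (- INR (S m) * Xn a (S (S m)) t))
    by (rewrite fact_S_INR; cbn [pow]; ring).
  exact HX.
Qed.

Lemma fam_Y_valid a : 0 < a -> valid (fam_Y a).
Proof.
  intros Ha m t Ht. unfold fam_Y.
  destruct (XY_derive a Ha (S m) t) as [_ HY].
  apply is_derive_scal with (k := (-1)^m * INR (fact m)) in HY.
  replace ((-1)^S m * INR (fact (S m)) * Yn a (S (S m)) t) with
    ((-1)^m * INR (fact m) * (- INR (S m) * Yn a (S (S m)) t))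
    by (rewrite fact_S_INR; cbn [pow]; ring).
  exact HY.
Qed.

Lemma m1_sq m : (-1)^m * (-1)^m = 1.
Proof. rewrite <- Rpow_mult_distr. replace (-1 * -1) with 1 by ring. apply pow1. Qed.

Definition fP1 a m t := / a^2 * (fam_inv m t - fam_X a m t).
Definition fP2 a m t := / a^2 * (fam_inv2 m t + / a * fam_Y a m t).
Definition fP3 a m t := fam_inv m t - fam_Y a m t.

Lemma fP1_valid a : 0 < a -> valid (fP1 a).
Proof.
  intros Ha m t Ht. unfold fP1. apply (is_derive_scal (fun t => fam_inv m t - fam_X a m t)).
  apply (is_derive_minus (fam_inv m) (fam_X a m)).
  apply fam_inv_valid; auto. apply fam_X_valid; auto.
Qed.

Lemma fP2_valid a : 0 < a -> valid (fP2 a).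
Proof.
  intros Ha m t Ht. unfold fP2. apply (is_derive_scal (fun t => fam_inv2 m t + / a * fam_Y a m t)).
  apply (is_derive_plus (fam_inv2 m) (fun t => / a * fam_Y a m t)).
  apply fam_inv2_valid; auto. apply (is_derive_scal (fam_Y a m)). apply fam_Y_valid; auto.
Qed.

Lemma fP3_valid a : 0 < a -> valid (fP3 a).
Proof.
  intros Ha m t Ht. unfold fP3.
  apply (is_derive_minus (fam_inv m) (fam_Y a m)).
  apply fam_inv_valid; auto. apply fam_Y_valid; auto.
Qed.

Lemma fact_pos m : 0 < INR (fact m).
Proof. apply lt_0_INR. apply lt_O_fact. Qed.

Lemma fP1_sign a : 0 < a -> signok (fP1 a).
Proof.
  intros Ha m t Ht. unfold fP1, fam_inv, fam_X.
  destruct (XY_abs a t (S m) Ha Ht) as [HX _].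
  assert (Hf := fact_pos m).
  assert (Hs := m1_sq m).
  replace ((-1) ^ m * (/ a ^ 2 * ((-1) ^ m * INR (fact m) * / t ^ S m - (-1) ^ m * INR (fact m) * Xn a (S m) t)))
    with (/ a^2 * INR (fact m) * ((-1)^m * (-1)^m) * (/ t ^ S m - Xn a (S m) t)) by ring.
  rewrite Hs. assert (0 < / a^2) by (apply Rinv_0_lt_compat, pow_lt; lra).
  apply Rmult_le_pos. nra.
  assert (Xn a (S m) t <= Rabs (Xn a (S m) t)) by apply Rle_abs. lra.
Qed.

Lemma fP3_sign a : 0 < a -> signok (fP3 a).
Proof.
  intros Ha m t Ht. unfold fP3, fam_inv, fam_Y.
  destruct (XY_abs a t (S m) Ha Ht) as [_ HY].
  assert (Hf := fact_pos m).
  assert (Hs := m1_sq m).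
  replace ((-1) ^ m * ((-1) ^ m * INR (fact m) * / t ^ S m - (-1) ^ m * INR (fact m) * Yn a (S m) t))
    with (INR (fact m) * ((-1)^m * (-1)^m) * (/ t ^ S m - Yn a (S m) t)) by ring.
  rewrite Hs. apply Rmult_le_pos. lra.
  assert (Yn a (S m) t <= Rabs (Yn a (S m) t)) by apply Rle_abs. lra.
Qed.

Lemma fP2_sign a : 0 < a -> signok (fP2 a).
Proof.
  intros Ha m t Ht. unfold fP2, fam_inv2, fam_Y.
  assert (HY := Y_abs2 a t (S m) Ha Ht).
  assert (Hf := fact_pos m).
  assert (Hs := m1_sq m).
  replace ((-1) ^ m * (/ a ^ 2 * ((-1) ^ m * INR (fact (S m)) * / t ^ S (S m) + / a * ((-1) ^ m * INR (fact m) * Yn a (S m) t))))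
    with (/ a^2 * ((-1)^m * (-1)^m) * (INR (fact (S m)) * / t ^ S (S m) + / a * INR (fact m) * Yn a (S m) t)) by ring.
  rewrite Hs. assert (0 < / a^2) by (apply Rinv_0_lt_compat, pow_lt; lra).
  apply Rmult_le_pos. nra.
  rewrite fact_S_INR.
  assert (- Yn a (S m) t <= INR (S m) * a / t ^ S (S m)).
  { assert (- Yn a (S m) t <= Rabs (Yn a (S m) t)) by (rewrite <- Rabs_Ropp; apply Rle_abs). lra. }
  assert (0 < / a) by (apply Rinv_0_lt_compat; lra).
  assert (HH : / a * INR (fact m) * Yn a (S m) t >= - (/ a * INR (fact m) * (INR (S m) * a / t ^ S (S m)))).
  { assert (0 < / a * INR (fact m)) by nra. nra. }
  replace (/ a * INR (fact m) * (INR (S m) * a / t ^ S (S m))) with (INR (S m) * INR (fact m) * / t ^ S (S m)) in HH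
    by (field; split; [nz| lra]).
  lra.
Qed.

Definition Ffam a c m t := c * fP1 a m t + 2 * a * fprod m (fP1 a) (fP3 a) t + (a^2 - 2*a) * fP2 a m t.

Lemma Ffam_valid a c : 0 < a -> valid (Ffam a c).
Proof.
  intros Ha m t Ht. unfold Ffam.
  apply (is_derive_plus (fun t => c * fP1 a m t + 2 * a * fprod m (fP1 a) (fP3 a) t)
                        (fun t => (a^2 - 2*a) * fP2 a m t)).
  apply (is_derive_plus (fun t => c * fP1 a m t) (fun t => 2 * a * fprod m (fP1 a) (fP3 a) t)).
  apply (is_derive_scal (fP1 a m)). apply fP1_valid; auto.
  apply (is_derive_scal (fprod m (fP1 a) (fP3 a))). apply fprod_valid; auto.
  apply fP1_valid; auto. apply fP3_valid; auto.
  apply (is_derive_scal (fP2 a m)). apply fP2_valid; auto.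
Qed.

Lemma Ffam_sign a c : 2 <= a -> 0 <= c -> signok (Ffam a c).
Proof.
  intros Ha Hc m t Ht. unfold Ffam.
  assert (H1 := fP1_sign a ltac:(lra) m t Ht).
  assert (H2 := fP2_sign a ltac:(lra) m t Ht).
  assert (H3 := fprod_sign m (fP1 a) (fP3 a) (fP1_sign a ltac:(lra)) (fP3_sign a ltac:(lra)) t Ht).
  assert (0 <= a^2 - 2*a) by nra.
  replace ((-1) ^ m * (c * fP1 a m t + 2 * a * fprod m (fP1 a) (fP3 a) t + (a ^ 2 - 2 * a) * fP2 a m t))
   with (c * ((-1)^m * fP1 a m t) + 2 * a * ((-1)^m * fprod m (fP1 a) (fP3 a) t) + (a ^ 2 - 2 * a) * ((-1)^m * fP2 a m t)) by ring.
  apply Rplus_le_le_0_compat. apply Rplus_le_le_0_compat.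
  apply Rmult_le_pos; auto. apply Rmult_le_pos; auto. lra. apply Rmult_le_pos; auto.
Qed.

Fixpoint tay (G : nat -> R -> R) (x y : R) (m : nat) : R :=
  match m with O => 0 | S m => tay G x y m + (x - y)^m / INR (fact m) * G m y end.

Lemma tay_derive : forall m G x y,
  is_derive (fun x => tay G x y (S m)) x (tay (fun k => G (S k)) x y m).
Proof.
  induction m as [|m IH]; intros G x y.
  - cbn [tay]. auto_derive; auto. simpl. ring.
  - apply (is_derive_ext (fun x => tay G x y (S m) + (x - y)^(S m) / INR (fact (S m)) * G (S m) y)).
    { intros; reflexivity. }
    replace (tay (fun k => G (S k)) x y (S m)) with
      (tay (fun k => G (S k)) x y m + INR (S m) * (x - y)^m / INR (fact (S m)) * G (S m) y).
    2:{ cbn [tay]. rewrite fact_S_INR. field. split. apply Rgt_not_eq, fact_pos. apply not_0_INR; lia. }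
    apply (is_derive_plus (fun x => tay G x y (S m)) (fun x => (x - y)^(S m) / INR (fact (S m)) * G (S m) y)).
    apply IH.
    auto_derive; auto.
    fixINR. rewrite ?S_INR. cbn [pred]. change (fact m + m * fact m)%nat with (fact (S m)). unfold Rdiv, Rminus. ring.
Qed.

Lemma tay_neg : forall m G x y, tay (fun k s => -1 * G k s) x y m = -1 * tay G x y m.
Proof. induction m as [|m IH]; intros; simpl. ring. rewrite IH. ring. Qed.

Lemma tay_yy : forall m G y, tay G y y (S m) = G O y.
Proof.
  induction m as [|m IH]; intros G y.
  - simpl. field.
  - change (tay G y y (S (S m))) with (tay G y y (S m) + (y - y)^(S m) / INR (fact (S m)) * G (S m) y).
    rewrite IH. replace (y - y) with 0 by ring. rewrite pow_i by lia. unfold Rdiv. ring.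
Qed.

Lemma tay_nonneg : forall m G x y, signok G -> 0 < y -> x <= y -> 0 <= tay G x y m.
Proof.
  induction m as [|m IH]; intros G x y HG Hy Hxy.
  - simpl; lra.
  - simpl. apply Rplus_le_le_0_compat. apply IH; auto.
    replace ((x - y)^m / INR (fact m) * G m y) with
      ((y - x)^m / INR (fact m) * ((-1)^m * G m y)).
    2:{ replace (x - y) with (-1 * (y - x)) by ring. rewrite Rpow_mult_distr. field.
        apply Rgt_not_eq, fact_pos. }
    apply Rmult_le_pos. apply Rmult_le_pos. apply pow_le; lra.
    apply Rlt_le, Rinv_0_lt_compat, fact_pos. apply HG; auto.
Qed.

Lemma valid_neg_shift' F : valid F -> valid (fun k s => -1 * F (S k) s).
Proof. intros H k t Ht. apply (is_derive_scal (fun s => F (S k) s)). apply H; auto. Qed.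

Lemma tay_rem : forall m G, valid G -> signok G -> forall x y, 0 < x -> x <= y ->
  tay G x y m <= G O x.
Proof.
  induction m as [|m IH]; intros G HGv HGs x y Hx Hxy.
  - simpl. specialize (HGs O x Hx). simpl in HGs. lra.
  - set (phi := fun s => G O s - tay G s y (S m)).
    assert (Hd : forall s, 0 < s -> is_derive phi s (G 1%nat s - tay (fun k => G (S k)) s y m)).
    { intros s Hs. unfold phi. apply (is_derive_minus (G O) (fun s => tay G s y (S m))).
      apply HGv; auto. apply tay_derive. }
    assert (Hneg : forall s, 0 < s -> s <= y -> G 1%nat s - tay (fun k => G (S k)) s y m <= 0).
    { intros s Hs Hsy.
      assert (H := IH _ (valid_neg_shift' G HGv) (signok_neg_shift G HGs) s y Hs Hsy).
      rewrite (tay_neg m (fun k => G (S k))) in H. lra. }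
    destruct (MVT_gen phi x y (fun s => G 1%nat s - tay (fun k => G (S k)) s y m)) as [c [Hc Heq]].
    + intros s. rewrite Rmin_left, Rmax_right by lra. intros Hs. apply Hd. lra.
    + intros s. rewrite Rmin_left, Rmax_right by lra. intros Hs.
      assert (Hs0 : 0 < s) by lra.
      exact (derivable_continuous_pt phi s (exist _ _ (proj1 (is_derive_Reals _ _ _) (Hd s Hs0)))).
    + rewrite Rmin_left, Rmax_right in Hc by lra.
      assert (Hy0 : phi y = 0) by (unfold phi; rewrite tay_yy; ring).
      assert (Hc0 := Hneg c ltac:(lra) ltac:(lra)).
      assert (phi x >= 0) by nra. unfold phi in H. lra.
Qed.

Lemma cm_bound G : valid G -> signok G -> forall m y, 0 < y ->
  (-1)^m * G m y <= INR (fact m) * (2 / y)^m * G O (y/2).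
Proof.
  intros Hv Hs m y Hy.
  assert (H := tay_rem (S m) G Hv Hs (y/2) y ltac:(lra) ltac:(lra)).
  simpl in H. assert (H0 := tay_nonneg m G (y/2) y Hs Hy ltac:(lra)).
  replace ((y/2 - y)^m) with ((-1)^m * (y/2)^m) in H.
  2:{ rewrite <- Rpow_mult_distr. f_equal. field. }
  assert (Hf := fact_pos m).
  assert (Hp : 0 <= INR (fact m) * (2 / y)^m).
  { apply Rmult_le_pos. lra. apply pow_le. apply Rlt_le, Rdiv_lt_0_compat; lra. }
  assert (H1 : (-1)^m * (y/2)^m / INR (fact m) * G m y <= G O (y/2)) by lra.
  apply Rmult_le_compat_l with (r := INR (fact m) * (2 / y)^m) in H1; auto.
  replace (INR (fact m) * (2 / y) ^ m * ((-1) ^ m * (y / 2) ^ m / INR (fact m) * G m y))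
    with (((2 / y) * (y / 2))^m * ((-1)^m * G m y)) in H1.
  2:{ rewrite Rpow_mult_distr. field. lra. }
  replace ((2 / y) * (y / 2)) with 1 in H1 by (field; lra).
  rewrite pow1 in H1. lra.
Qed.

Lemma MVT_bound (f df : R -> R) (a b B : R) :
  (forall s, Rmin a b <= s <= Rmax a b -> is_derive f s (df s)) ->
  (forall s, Rmin a b <= s <= Rmax a b -> Rabs (df s) <= B) ->
  Rabs (f b - f a) <= B * Rabs (b - a).
Proof.
  intros Hd Hb.
  destruct (MVT_gen f a b df) as [c [Hc Heq]].
  - intros s Hs. apply Hd. lra.
  - intros s Hs. exact (derivable_continuous_pt f s (exist _ _ (proj1 (is_derive_Reals _ _ _) (Hd s Hs)))).
  - rewrite Heq, Rabs_mult. apply Rmult_le_compat_r. apply Rabs_pos. apply Hb; auto.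
Qed.

Lemma taylor2 (g g1 g2 : R -> R) (t r B : R) : 0 < r ->
  (forall s, t - r <= s <= t + r -> is_derive g s (g1 s) /\ is_derive g1 s (g2 s) /\ Rabs (g2 s) <= B) ->
  forall h, Rabs h <= r -> Rabs (g (t + h) - g t - h * g1 t) <= B * h^2.
Proof.
  intros Hr Hs h Hh.
  assert (Hrange : forall s, Rmin t (t + h) <= s <= Rmax t (t + h) -> t - r <= s <= t + r /\ Rabs (s - t) <= Rabs h).
  { intros s Hs0. unfold Rmin, Rmax in Hs0.
    destruct (Rle_dec t (t + h)); split; try (apply Rabs_le_between' || idtac);
    unfold Rabs in *; repeat destruct Rcase_abs; lra. }
  assert (HB : 0 <= B).
  { destruct (Hs t ltac:(lra)) as [_ [_ H]]. assert (0 <= Rabs (g2 t)) by apply Rabs_pos. lra. }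
  assert (H1 : forall s, Rmin t (t + h) <= s <= Rmax t (t + h) -> Rabs (g1 s - g1 t) <= B * Rabs h).
  { intros s Hs0. destruct (Hrange s Hs0) as [Hsr Hst].
    eapply Rle_trans. apply (MVT_bound g1 g2 t s B).
    - intros v Hv. apply Hs. unfold Rmin, Rmax in *. destruct (Rle_dec t s), (Rle_dec t (t+h)); lra.
    - intros v Hv. apply Hs. unfold Rmin, Rmax in *. destruct (Rle_dec t s), (Rle_dec t (t+h)); lra.
    - apply Rmult_le_compat_l; auto. }
  replace (g (t + h) - g t - h * g1 t) with ((g (t+h) - (t+h) * g1 t) - (g t - t * g1 t)) by ring.
  eapply Rle_trans.
  apply (MVT_bound (fun s => g s - s * g1 t) (fun s => g1 s - g1 t) t (t + h) (B * Rabs h)).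
  - intros s Hs0. destruct (Hrange s Hs0) as [Hsr _].
    apply (is_derive_minus g (fun s => s * g1 t)). apply Hs; auto.
    auto_derive; auto; ring.
  - exact H1.
  - replace (t + h - t) with h by ring. rewrite Rmult_assoc. apply Rmult_le_compat_l; auto.
    rewrite <- Rabs_mult. rewrite Rabs_right. right; ring. nra.
Qed.

Lemma ex_series_bound (a M : nat -> R) (K : R) :
  ex_series M -> (forall j, Rabs (a j) <= K * M j) -> ex_series a.
Proof.
  intros HM Hb. apply (ex_series_le a (fun j => K * M j)).
  - intros j. apply Hb.
  - apply (ex_series_scal_l K M) in HM. exact HM.
Qed.

Lemma series_valid (H : nat -> nat -> R -> R) (M : nat -> R) :
  (forall j, valid (H j)) -> ex_series M -> (forall j, 0 <= M j) ->
  (forall i d, 0 < d -> exists K, 0 <= K /\ forall j s, d <= s -> Rabs (H j i s) <= K * M j) ->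
  valid (fun m t => Series (fun j => H j m t)).
Proof.
  intros Hv HM HM0 Hb m t Ht.
  destruct (Hb m (t/2) ltac:(lra)) as [K0 [HK0 B0]].
  destruct (Hb (S m) (t/2) ltac:(lra)) as [K1 [HK1 B1]].
  destruct (Hb (S (S m)) (t/2) ltac:(lra)) as [K2 [HK2 B2]].
  assert (SM0 : 0 <= Series M).
  { replace 0 with (Series (fun n => 0 * M n)) by (rewrite Series_scal_l; ring).
    apply Series_le; auto. intros n; specialize (HM0 n); split; lra. }
  apply is_derive_Reals. intros eps Heps.
  assert (Hden : 0 < K2 * Series M + 1) by nra.
  assert (Hd : 0 < Rmin (t/2) (eps / (K2 * Series M + 1))).
  { apply Rmin_pos. lra. apply Rdiv_lt_0_compat; lra. }
  exists (mkposreal _ Hd). intros h Hh0 Hh. simpl in Hh.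
  assert (Hh1 : Rabs h <= t/2) by (eapply Rle_trans; [left; exact Hh| apply Rmin_l]).
  assert (Hh2 : Rabs h < eps / (K2 * Series M + 1)) by (eapply Rlt_le_trans; [exact Hh| apply Rmin_r]).
  assert (Hth : t/2 <= t + h) by (unfold Rabs in Hh1; destruct Rcase_abs in Hh1; lra).
  assert (E0 : ex_series (fun j => H j m (t + h))).
  { apply (ex_series_bound _ M K0 HM). intros j; apply B0; lra. }
  assert (E1 : ex_series (fun j => H j m t)).
  { apply (ex_series_bound _ M K0 HM). intros j; apply B0; lra. }
  assert (E2 : ex_series (fun j => h * H j (S m) t)).
  { apply (ex_series_bound _ M (Rabs h * K1) HM). intros j. rewrite Rabs_mult, Rmult_assoc.
    apply Rmult_le_compat_l. apply Rabs_pos. apply B1; lra. }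
  assert (Hj : forall j, Rabs (H j m (t + h) - H j m t - h * H j (S m) t) <= (K2 * h^2) * M j).
  { intros j. replace (K2 * h^2 * M j) with ((K2 * M j) * h^2) by ring.
    apply (taylor2 (H j m) (H j (S m)) (H j (S (S m))) t (t/2) (K2 * M j)); auto. lra.
    intros s Hs. split; [|split].
    - apply Hv; lra.
    - apply Hv; lra.
    - apply B2; lra. }
  assert (ED : ex_series (fun j => H j m (t + h) - H j m t - h * H j (S m) t)).
  { apply (ex_series_bound _ M (K2 * h^2) HM). exact Hj. }
  assert (Heq : Series (fun j => H j m (t + h)) - Series (fun j => H j m t) - h * Series (fun j => H j (S m) t)
     = Series (fun j => H j m (t + h) - H j m t - h * H j (S m) t)).
  { rewrite Series_minus; auto. rewrite Series_minus; auto. rewrite Series_scal_l. ring.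
    apply (ex_series_minus (fun j => H j m (t + h)) (fun j => H j m t)); auto. }
  assert (Hbound : Rabs (Series (fun j => H j m (t + h) - H j m t - h * H j (S m) t)) <= K2 * h^2 * Series M).
  { eapply Rle_trans. apply Series_Rabs.
    apply (ex_series_bound _ M (K2 * h^2) HM). intros j. rewrite Rabs_Rabsolu. apply Hj.
    rewrite <- Series_scal_l. apply Series_le.
    - intros j. split. apply Rabs_pos. apply Hj.
    - apply (ex_series_scal_l (K2 * h^2) M) in HM. exact HM. }
  replace ((Series (fun j => H j m (t + h)) - Series (fun j => H j m t)) / h - Series (fun j => H j (S m) t))
    with ((Series (fun j => H j m (t + h)) - Series (fun j => H j m t) - h * Series (fun j => H j (S m) t)) / h)
    by (field; auto).
  rewrite Heq. unfold Rdiv. rewrite Rabs_mult, Rabs_inv.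
  assert (Hha : 0 < Rabs h) by (apply Rabs_pos_lt; auto).
  apply Rle_lt_trans with (K2 * Series M * Rabs h).
  { apply Rmult_le_reg_r with (Rabs h); auto. rewrite Rmult_assoc, Rinv_l by lra.
    replace (K2 * Series M * Rabs h * Rabs h) with (K2 * (Rabs h)^2 * Series M) by ring.
    rewrite pow2_abs. lra. }
  apply Rle_lt_trans with (K2 * Series M * (eps / (K2 * Series M + 1))).
  { apply Rmult_le_compat_l. nra. lra. }
  apply Rmult_lt_reg_r with (K2 * Series M + 1); auto.
  replace (K2 * Series M * (eps / (K2 * Series M + 1)) * (K2 * Series M + 1)) with (K2 * Series M * eps)
    by (field; lra).
  nra.
Qed.

Lemma sum_tel n : sum_n (fun j => / INR (S j) - / INR (S (S j))) n = 1 - / INR (S (S n)).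
Proof.
  induction n as [|n IH].
  - rewrite sum_O. simpl. field.
  - rewrite sum_Sn, IH. unfold plus; simpl. ring.
Qed.

Lemma ex_series_tel : ex_series (fun j => / INR (S j) - / INR (S (S j))).
Proof.
  exists 1.
  assert (HL : is_lim_seq (sum_n (fun j => / INR (S j) - / INR (S (S j)))) 1).
  2:{ exact HL. }
  apply (is_lim_seq_ext (fun n => 1 - / INR (S (S n)))).
  { intros n. rewrite sum_tel. reflexivity. }
  replace (Finite 1) with (Finite (1 - 0)) by (f_equal; ring).
  apply is_lim_seq_minus'. apply is_lim_seq_const.
  assert (H0 : is_lim_seq (fun n => INR (S (S n))) p_infty).
  { apply (is_lim_seq_incr_1 (fun n => INR (S n))). apply (is_lim_seq_incr_1 INR). apply is_lim_seq_INR. }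
  assert (H1 := is_lim_seq_inv _ _ H0 ltac:(discriminate)). simpl in H1. exact H1.
Qed.

Definition Mj (j : nat) := / INR (S j) ^ 2.

Lemma ex_series_M : ex_series Mj.
Proof.
  apply (ex_series_le Mj (fun j => 2 * (/ INR (S j) - / INR (S (S j))))).
  - intros j. unfold Mj. change (norm (/ INR (S j) ^ 2)) with (Rabs (/ INR (S j) ^ 2)).
    assert (H1 : 0 < INR (S j)) by (apply lt_0_INR; lia).
    rewrite (S_INR (S j)). rewrite Rabs_right.
    2:{ apply Rle_ge, Rlt_le, Rinv_0_lt_compat, pow_lt; auto. }
    replace (2 * (/ INR (S j) - / (INR (S j) + 1))) with (2 / (INR (S j) * (INR (S j) + 1))) by (field; lra).
    rewrite <- pow_inv. replace ((/ INR (S j))^2) with (/ INR (S j) * / INR (S j)) by ring.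
    unfold Rdiv. rewrite Rinv_mult.
    assert (HS : 1 <= INR (S j)) by (apply (le_INR 1); lia).
    assert (0 < / INR (S j)) by (apply Rinv_0_lt_compat; lra).
    assert (/ INR (S j) <= 2 * / (INR (S j) + 1)).
    { apply Rmult_le_reg_r with (INR (S j) * (INR (S j) + 1)). nra.
      replace (/ INR (S j) * (INR (S j) * (INR (S j) + 1))) with (INR (S j) + 1) by (field; lra).
      replace (2 * / (INR (S j) + 1) * (INR (S j) * (INR (S j) + 1))) with (2 * INR (S j)) by (field; lra).
      lra. }
    nra.
  - exact (ex_series_scal_l 2 _ ex_series_tel).
Qed.

Definition aj (j : nat) := 2 * PI * INR (S j).

Lemma aj_ge j : 2 <= aj j /\ INR (S j) <= aj j.
Proof.
  unfold aj. assert (H := PI2_1). assert (HS : 1 <= INR (S j)) by (apply (le_INR 1); lia).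
  split; nra.
Qed.

Definition Hfam (n j : nat) (m : nat) (t : R) :=
  / aj j ^ (2 * n - 1) * (2 / aj j) * Ffam (aj j) (2 * INR n - 1) m t.

Lemma Hfam_valid n j : valid (Hfam n j).
Proof.
  intros m t Ht. unfold Hfam. apply (is_derive_scal (Ffam (aj j) (2 * INR n - 1) m)).
  apply Ffam_valid; auto. destruct (aj_ge j); lra.
Qed.

Lemma coef_pos n j : 0 < / aj j ^ (2 * n - 1) * (2 / aj j).
Proof.
  destruct (aj_ge j). apply Rmult_lt_0_compat. apply Rinv_0_lt_compat, pow_lt; lra.
  apply Rdiv_lt_0_compat; lra.
Qed.

Lemma Hfam_sign n j : (1 <= n)%nat -> signok (Hfam n j).
Proof.
  intros Hn m t Ht. unfold Hfam.
  assert (Hc : 1 <= INR n) by (apply (le_INR 1); auto).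
  assert (H := Ffam_sign (aj j) (2 * INR n - 1) (proj1 (aj_ge j)) ltac:(lra) m t Ht).
  assert (Hp := coef_pos n j).
  replace ((-1) ^ m * (/ aj j ^ (2 * n - 1) * (2 / aj j) * Ffam (aj j) (2 * INR n - 1) m t))
    with ((/ aj j ^ (2 * n - 1) * (2 / aj j)) * ((-1) ^ m * Ffam (aj j) (2 * INR n - 1) m t)) by ring.
  apply Rmult_le_pos; lra.
Qed.

Lemma Hfam_0 n j t : 0 < t -> Hfam n j O t = / t^2 * pn_term n t (INR (S j)).
Proof.
  intros Ht. unfold Hfam, Ffam, fP1, fP2, fP3, fam_inv, fam_inv2, fam_X, fam_Y, Xn, Yn, pn_term.
  cbv beta zeta. cbn [fprod XY fst snd fact].
  change (2 * PI * INR (S j)) with (aj j).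
  replace (4 * PI * INR (S j)) with (2 * aj j) by (unfold aj; ring).
  replace (8 * PI * INR (S j)) with (4 * aj j) by (unfold aj; ring).
  destruct (aj_ge j) as [Ha _].
  generalize (aj j) Ha. intros a Ha'.
  change (INR (1*1)) with 1. change (INR 1) with 1.
  assert (0 < a ^ (2 * n - 1)) by (apply pow_lt; lra).
  assert (0 < t^2 + a^2) by nra.
  field. repeat split; apply Rgt_not_eq; nra.
Qed.

Lemma Ffam0_bound a c x : 2 <= a -> 0 <= c -> 0 < x ->
  Ffam a c O x <= (c + 1) * / x + 2 * (/ x)^2.
Proof.
  intros Ha Hc Hx.
  assert (Hu : 0 < x^2 + a^2) by nra.
  assert (E1 : fP1 a O x = / a^2 * (/ x - x / (x^2 + a^2))).
  { unfold fP1, fam_inv, fam_X, Xn. cbn [XY fst snd fact]. change (INR 1) with 1.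
    field. repeat split; apply Rgt_not_eq; nra. }
  assert (E3 : fP3 a O x = / x + a / (x^2 + a^2)).
  { unfold fP3, fam_inv, fam_Y, Yn. cbn [XY fst snd fact]. change (INR 1) with 1.
    field. repeat split; apply Rgt_not_eq; nra. }
  assert (E2 : fP2 a O x = / a^2 * ((/ x)^2 - / (x^2 + a^2))).
  { unfold fP2, fam_inv2, fam_Y, Yn. cbn [XY fst snd fact]. change (INR (1*1)) with 1. change (INR 1) with 1.
    field. repeat split; apply Rgt_not_eq; nra. }
  assert (S1 := fP1_sign a ltac:(lra) O x Hx). assert (S2 := fP2_sign a ltac:(lra) O x Hx).
  assert (S3 := fP3_sign a ltac:(lra) O x Hx). simpl in S1, S2, S3.
  rewrite Rmult_1_l in S1, S2, S3.
  unfold Ffam. cbn [fprod].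
  set (p1 := fP1 a O x) in *. set (p2 := fP2 a O x) in *. set (p3 := fP3 a O x) in *.
  assert (Hia : 0 < / a^2 <= 1).
  { split. apply Rinv_0_lt_compat; nra. rewrite <- Rinv_1. apply Rinv_le_contravar; nra. }
  assert (Hix : 0 < / x) by (apply Rinv_0_lt_compat; lra).
  assert (B1 : p1 <= / a^2 * / x).
  { rewrite E1. apply Rmult_le_compat_l. lra.
    assert (0 <= x / (x^2 + a^2)) by (apply Rdiv_le_0_compat; lra). lra. }
  assert (B3 : p3 <= / x + 1).
  { rewrite E3. assert (a / (x^2 + a^2) <= 1).
    { apply Rmult_le_reg_r with (x^2 + a^2); auto. unfold Rdiv. rewrite Rmult_assoc, Rinv_l by lra. nra. }
    lra. }
  assert (B2 : p2 <= / a^2 * (/ x)^2).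
  { rewrite E2. apply Rmult_le_compat_l. lra.
    assert (0 < / (x^2 + a^2)) by (apply Rinv_0_lt_compat; lra). lra. }
  assert (T1 : c * p1 <= c * / x).
  { apply Rmult_le_compat_l; auto. nra. }
  assert (T2 : 2 * a * p1 * p3 <= / x * (/ x + 1)).
  { apply Rle_trans with (2 * a * (/ a^2 * / x) * (/ x + 1)).
    { apply Rmult_le_compat; try nra. }
    replace (2 * a * (/ a ^ 2 * / x) * (/ x + 1)) with ((2 / a) * (/ x * (/ x + 1))) by (field; lra).
    assert (2 / a <= 1).
    { apply Rmult_le_reg_r with a. lra. unfold Rdiv. rewrite Rmult_assoc, Rinv_l by lra. lra. }
    assert (0 < / x * (/ x + 1)) by nra. nra. }
  assert (T3 : (a^2 - 2 * a) * p2 <= (/ x)^2).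
  { apply Rle_trans with (a^2 * p2). nra.
    apply Rle_trans with (a^2 * (/ a^2 * (/ x)^2)). apply Rmult_le_compat_l; nra.
    right. field. lra. }
  nra.
Qed.

Lemma coef_bound n j : (1 <= n)%nat -> / aj j ^ (2 * n - 1) * (2 / aj j) <= 2 * Mj j.
Proof.
  intros Hn. destruct (aj_ge j) as [Ha HS].
  assert (HS0 : 0 < INR (S j)) by (apply lt_0_INR; lia).
  assert (Hp : aj j <= aj j ^ (2 * n - 1)).
  { rewrite <- (pow_1 (aj j)) at 1. apply Rle_pow. lra. lia. }
  assert (/ aj j ^ (2 * n - 1) <= / aj j) by (apply Rinv_le_contravar; lra).
  apply Rle_trans with (/ aj j * (2 / aj j)).
  { apply Rmult_le_compat_r. apply Rlt_le, Rdiv_lt_0_compat; lra. auto. }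
  unfold Mj. replace (/ aj j * (2 / aj j)) with (2 * / (aj j)^2) by (field; lra).
  apply Rmult_le_compat_l. lra. apply Rinv_le_contravar. nra. apply pow_incr; lra.
Qed.

Lemma Hfam_bound n : (1 <= n)%nat -> forall i d, 0 < d ->
  exists K, 0 <= K /\ forall j s, d <= s -> Rabs (Hfam n j i s) <= K * Mj j.
Proof.
  intros Hn i d Hd.
  set (c := 2 * INR n - 1).
  assert (Hc : 0 <= c) by (unfold c; assert (1 <= INR n) by (apply (le_INR 1); auto); lra).
  set (Kf := (c + 1) * (2 / d) + 2 * (2 / d)^2).
  assert (H2d : 0 < 2 / d) by (apply Rdiv_lt_0_compat; lra).
  assert (HKf : 0 <= Kf) by (unfold Kf; nra).
  assert (Hfi := fact_pos i).
  exists (INR (fact i) * (2 / d)^i * (2 * Kf)). split.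
  { apply Rmult_le_pos. apply Rmult_le_pos. lra. apply pow_le; lra. lra. }
  intros j s Hs.
  assert (Hs0 : 0 < s) by lra.
  assert (Habs : Rabs (Hfam n j i s) = (-1)^i * Hfam n j i s).
  { rewrite <- (Rmult_1_l (Rabs _)), <- (pow_1_abs i), <- Rabs_mult.
    apply Rabs_right. apply Rle_ge. apply Hfam_sign; auto. }
  rewrite Habs.
  eapply Rle_trans. apply cm_bound. apply Hfam_valid. apply Hfam_sign; auto. auto.
  assert (HF0 : 0 <= Ffam (aj j) c O (s/2)).
  { assert (H := Ffam_sign (aj j) c (proj1 (aj_ge j)) Hc O (s/2) ltac:(lra)). simpl in H. lra. }
  assert (HF1 : Ffam (aj j) c O (s/2) <= Kf).
  { eapply Rle_trans. apply Ffam0_bound; auto. apply (proj1 (aj_ge j)). lra.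
    assert (/ (s/2) <= 2 / d).
    { replace (/ (s/2)) with (2 / s) by (field; lra). unfold Rdiv. apply Rmult_le_compat_l. lra.
      apply Rinv_le_contravar; lra. }
    assert (0 < / (s/2)) by (apply Rinv_0_lt_compat; lra).
    unfold Kf. apply Rplus_le_compat. apply Rmult_le_compat_l; lra.
    apply Rmult_le_compat_l. lra. apply pow_incr; lra. }
  assert (Hcoef := coef_bound n j Hn). assert (Hcp := coef_pos n j).
  assert (HM : 0 <= Mj j) by (unfold Mj; apply Rlt_le, Rinv_0_lt_compat, pow_lt, lt_0_INR; lia).
  unfold Hfam. fold c.
  assert (Hpw : (2 / s)^i <= (2 / d)^i).
  { apply pow_incr. split. apply Rlt_le, Rdiv_lt_0_compat; lra.
    unfold Rdiv. apply Rmult_le_compat_l. lra. apply Rinv_le_contravar; lra. }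
  assert (Hpw0 : 0 <= (2 / s)^i) by (apply pow_le, Rlt_le, Rdiv_lt_0_compat; lra).
  set (cf := / aj j ^ (2 * n - 1) * (2 / aj j)) in *.
  set (F := Ffam (aj j) c O (s/2)) in *.
  set (P := (2 / s)^i) in *. set (Q := (2 / d)^i) in *.
  assert (cf * F <= 2 * Mj j * Kf).
  { apply Rmult_le_compat; lra. }
  assert (0 <= cf * F) by nra.
  replace (INR (fact i) * P * (cf * F)) with (INR (fact i) * (P * (cf * F))) by ring.
  replace (INR (fact i) * Q * (2 * Kf) * Mj j) with (INR (fact i) * (Q * (2 * Mj j * Kf))) by ring.
  apply Rmult_le_compat_l. lra.
  apply Rmult_le_compat; lra.
Qed.

Theorem proposition5p1 (n : nat) (hn : (1 <= n)%nat) :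
  completely_monotonic (p_n n).
Proof.
  set (G := fun m t => Series (fun j => Hfam n j m t)).
  assert (HM0 : forall j, 0 <= Mj j).
  { intros j. unfold Mj. apply Rlt_le, Rinv_0_lt_compat, pow_lt, lt_0_INR; lia. }
  assert (Gv : valid G) by exact (series_valid (Hfam n) Mj (Hfam_valid n) ex_series_M HM0 (Hfam_bound n hn)).
  assert (Hf : forall t, 0 < t -> p_n n t = G O t).
  { intros t Ht. unfold p_n, G. rewrite <- Series_scal_l. apply Series_ext.
    intros j. rewrite Hfam_0; auto. }
  intros m t Ht. destruct (fam_derive_n G (p_n n) Hf Gv m t Ht) as [E D].
  split; auto. rewrite D. unfold G. rewrite <- Series_scal_l.
  destruct (Hfam_bound n hn m t Ht) as [K [HK HB]].
  replace 0 with (Series (fun j => 0 * Mj j)) by (rewrite Series_scal_l; ring).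
  apply Series_le.
  - intros j. split. lra. rewrite Rmult_0_l. apply (Hfam_sign n j hn m t Ht).
  - apply (ex_series_bound _ Mj K ex_series_M). intros j.
    rewrite Rabs_mult, pow_1_abs, Rmult_1_l. apply HB. lra.
Qed.
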